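(* $\mathfrak{icp}(\mathsf{null}\setminus\{\emptyset\},\subseteq)=\operatorname{add}(\mathsf{null})$.
   Context: $\mathsf{null}$ is the ideal of Lebesgue measure zero subsets of $2^\omega$, here ordered by inclusion. For a poset $(P,\le)$, $F\subseteq P$ is an incomparable family if for every $p\in P$ there is $q\in F$ with $p\not\le q$ and $q\not\le p$; $\mathfrak{icp}(P)$ is the minimal size of an incomparable family. $\operatorname{add}(\mathsf{null})$ is the minimal size of a family of null sets whose union is not null. *)

(* Defs.v *)
From mathcomp Require Import all_boot all_order all_algebra.
From mathcomp Require Import boolp classical_sets cardinality.
Set Implicit Arguments. Unset Strict Implicit. Unset Printing Implicit Defensive.
Import GRing.Theory Num.Theory.

Definition cantor := nat -> bool.

(* basic clopen cylinder determined by a finite binary string s;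
   its (coin-flipping / Lebesgue) measure is 2^-(size s) *)
Definition cyl (s : seq bool) : set cantor :=
  [set x | forall i, (i < size s)%N -> x i = nth false s i].

Definition null (A : set cantor) : Prop :=
  forall k : nat, exists c : nat -> seq bool,
    (A `<=` \bigcup_n cyl (c n))%classic /\
    forall N : nat,
      (\sum_(n < N) ((2%:R : rat) ^+ size (c n))^-1 <= ((2%:R : rat) ^+ k)^-1)%R.

Definition nonempty_null (A : set cantor) : Prop := null A /\ A <> set0.

Definition incomparable_family (F : set (set cantor)) : Prop :=
  (F `<=` nonempty_null)%classic /\
  forall p, nonempty_null p ->
    exists2 q, F q & ~ (p `<=` q)%classic /\ ~ (q `<=` p)%classic.

Definition add_null_family (G : set (set cantor)) : Prop :=
  (G `<=` null)%classic /\ ~ null (\bigcup_(A in G) A)%classic.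

Definition min_size (P : set (set cantor) -> Prop) (F : set (set cantor)) : Prop :=
  P F /\ forall G, P G -> (F #<= G)%card.

(* Main.v *)
Require Import Defs.
From mathcomp Require Import all_boot all_order all_algebra.
From mathcomp Require Import boolp classical_sets cardinality.
From mathcomp Require Import ring lra.
Set Implicit Arguments. Unset Strict Implicit. Unset Printing Implicit Defensive.
Import Order.TTheory GRing.Theory Num.Theory.
Local Open Scope classical_set_scope.
Local Open Scope ring_scope.

Lemma mk_card_le (T U : pointedType) (A : set T) (B : set U) (f : T -> U) :
  (forall x, A x -> B (f x)) -> (forall x y, A x -> A y -> f x = f y -> x = y) ->
  (A #<= B)%card.
Proof.
move=> fAB finj; apply/pcard_leP; apply/injfunPex; exists f.
  by move=> x Ax; apply: fAB.
by move=> x y /set_mem Ax /set_mem Ay; apply: finj.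
Qed.

Definition w (s : seq bool) : rat := ((2%:R : rat) ^+ size s)^-1.

Lemma w_ge0 s : (0 <= w s)%R.
Proof. by rewrite /w invr_ge0 exprn_ge0. Qed.

Lemma inv2pow n : (((2%:R : rat) ^+ n.+1)^-1 = ((2%:R:rat) ^+ n)^-1 / 2%:R)%R.
Proof. by rewrite exprS invrM ?unitfE ?expf_neq0 // mulrC. Qed.

Lemma pow_inv_le m n : (m <= n)%N -> (((2%:R : rat) ^+ n)^-1 <= ((2%:R:rat) ^+ m)^-1)%R.
Proof.
move=> mn; rewrite lef_pV2 ?posrE ?exprn_gt0 //.
by rewrite ler_eXn2l // ltr1n.
Qed.

Lemma geo_sum k N :
  (\sum_(n < N) ((2%:R : rat) ^+ (n + k).+1)^-1 + ((2%:R:rat) ^+ (N + k))^-1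
   = ((2%:R:rat) ^+ k)^-1)%R.
Proof.
elim: N => [|N IH]; first by rewrite big_ord0 add0r.
rewrite big_ord_recr /= -IH -addrA; congr (_ + _)%R.
rewrite addSn inv2pow; set a := (_ ^-1)%R; field => //.
Qed.

Lemma geo_le k N :
  (\sum_(n < N) ((2%:R : rat) ^+ (n + k).+1)^-1 <= ((2%:R:rat) ^+ k)^-1)%R.
Proof.
rewrite -(geo_sum k N) lerDl invr_ge0 exprn_ge0 //.
Qed.

Lemma sum_widen (F : nat -> rat) N M : (N <= M)%N -> (forall n, 0 <= F n)%R ->
  (\sum_(n < N) F n <= \sum_(n < M) F n)%R.
Proof.
move=> NM F0; rewrite (big_ord_widen M F NM) [X in (_ <= X)%R]big_mkcond /=.
rewrite big_mkcond /=; apply: ler_sum => i _; case: ifP => // _; exact: F0.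
Qed.

Lemma sum_evenodd (F : nat -> rat) M :
  (\sum_(n < M.*2) F n = \sum_(m < M) F m.*2 + \sum_(m < M) F m.*2.+1)%R.
Proof.
elim: M => [|M IH]; first by rewrite !big_ord0 addr0.
rewrite doubleS !big_ord_recr /= IH; ring.
Qed.

Lemma null_sub (A B : set cantor) : A `<=` B -> null B -> null A.
Proof. by move=> AB nB k; have [c [cB cs]] := nB k; exists c; split => //; apply: subset_trans cB. Qed.

Lemma null_set1 (x : cantor) : null [set x].
Proof.
move=> k; exists (fun n => mkseq x (n + k).+1); split.
  move=> y -> /=; exists 0%N => // i; rewrite size_mkseq => hi; by rewrite nth_mkseq.
move=> N; apply: le_trans (geo_le k N); apply: ler_sum => i _.
by rewrite size_mkseq.
Qed.

Lemma null_setU (A B : set cantor) : null A -> null B -> null (A `|` B).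
Proof.
move=> nA nB k; have [cA [covA sA]] := nA k.+1; have [cB [covB sB]] := nB k.+1.
exists (fun n => if odd n then cB n./2 else cA n./2); split.
  move=> x [/covA|/covB] [m _ hm].
    by exists m.*2 => //=; rewrite odd_double doubleK.
  by exists m.*2.+1 => //=; rewrite odd_double /= uphalf_double.
move=> N.
have H := @sum_widen (fun n => w (if odd n then cB n./2 else cA n./2)) N (N + N) (leq_addr N N) (fun n => w_ge0 _).
apply: le_trans H _.
rewrite addnn (@sum_evenodd (fun n => w (if odd n then cB n./2 else cA n./2))).
have -> : ((2%:R : rat) ^+ k)^-1 = ((2%:R : rat) ^+ k.+1)^-1 + ((2%:R : rat) ^+ k.+1)^-1.
  by rewrite inv2pow; set a := (_ ^-1); field => //.
apply: lerD.
  apply: le_trans (sA N); apply: ler_sum => i _ /=.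
  by rewrite odd_double doubleK.
apply: le_trans (sB N); apply: ler_sum => i _ /=.
by rewrite odd_double /= uphalf_double.
Qed.

Definition cons_c (b : bool) (x : cantor) : cantor :=
  fun i => if i is i'.+1 then x i' else b.

Definition shift (b : bool) (A : set cantor) : set cantor := [set cons_c b x | x in A].

Lemma cons_c_inj b : injective (cons_c b).
Proof. move=> x y e; apply: funext => i; exact: (congr1 (fun f => f i.+1) e). Qed.

Lemma cons_c_head b x : cons_c b x 0 = b. Proof. by []. Qed.

Lemma null_shift b A : null A -> null (shift b A).
Proof.
move=> nA k; have [c [cov s]] := nA k.
exists (fun n => b :: c n); split.
  move=> _ [x /cov [n _ hn] <-]; exists n => // -[|i] //= hi.
  exact: hn.
move=> N; apply: le_trans (s N); apply: ler_sum => i _ /=.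
by apply: pow_inv_le.
Qed.

Lemma null_tail b p : null p -> null [set x | p (cons_c b x)].
Proof.
move=> np k; have [c [cov s]] := np k.+1.
exists (fun n => behead (c n)); split.
  move=> x /cov [n _ hn]; exists n => // i; rewrite size_behead => hi /=.
  have := hn i.+1; rewrite /= nth_behead; apply; rewrite -ltn_predRL //.
move=> N; apply: (@le_trans _ _ (2%:R * \sum_(n < N) w (c n))%R).
  rewrite mulr_sumr; apply: ler_sum => i _; rewrite /w.
  case: (c i) => [|a s'] /=; first by rewrite expr0 invr1; lra.
  by rewrite inv2pow mulrC divfK.
have := s N; rewrite -/(w _) => h.
apply: le_trans (ler_wpM2l _ (s N)) _; first by [].
by rewrite inv2pow mulrC divfK.
Qed.

Definition pre_b (s t : seq bool) : bool :=
  (size s <= size t)%N && all (fun i => nth false s i == nth false t i) (iota 0 (size s)).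

Lemma pre_bP s t : pre_b s t <->
  (size s <= size t)%N /\ forall i, (i < size s)%N -> nth false s i = nth false t i.
Proof.
split.
  case/andP => st /allP h; split => // i hi; apply/eqP/h; by rewrite mem_iota.
case=> st h; apply/andP; split => //; apply/allP => i; rewrite mem_iota add0n => /andP[_ hi].
by apply/eqP/h.
Qed.

Lemma cyl_pre s t x : cyl s x -> cyl t x -> (size s <= size t)%N -> pre_b s t.
Proof.
move=> hs ht st; apply/pre_bP; split => // i hi.
by rewrite -hs // ht //; apply: leq_trans st.
Qed.

Lemma cyl_rcons s b x : cyl (rcons s b) x -> cyl s x /\ x (size s) = b.
Proof.
move=> h; split.
  move=> i hi; rewrite h ?size_rcons ?(ltnW hi) //; first by rewrite nth_rcons hi.
  by apply: leq_trans hi _.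
by rewrite h ?size_rcons // nth_rcons ltnn eqxx.
Qed.

Lemma rcons_cyl s b x : cyl s x -> x (size s) = b -> cyl (rcons s b) x.
Proof.
move=> h hb i; rewrite size_rcons ltnS leq_eqVlt => /orP[/eqP ->|hi].
  by rewrite nth_rcons ltnn eqxx.
by rewrite nth_rcons hi h.
Qed.

Lemma pre_excl t s : pre_b (rcons t false) s -> pre_b (rcons t true) s -> False.
Proof.
move=> /pre_bP [_ h0] /pre_bP [_ h1].
have := h0 (size t); rewrite size_rcons ltnSn nth_rcons ltnn eqxx => /(_ isT) e0.
have := h1 (size t); rewrite size_rcons ltnSn nth_rcons ltnn eqxx => /(_ isT) e1.
by rewrite -e0 in e1.
Qed.

Lemma sum_mem (l : seq (seq bool)) s : s \in l -> w s <= \sum_(u <- l) w u.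
Proof.
move=> sl; rewrite (big_rem s) //= lerDl sumr_ge0 // => u _; exact: w_ge0.
Qed.

Lemma cover_sum d : forall t l, (forall s, s \in l -> size s <= size t + d)%N ->
  (forall x, cyl t x -> exists2 s, s \in l & cyl s x) -> w t <= \sum_(s <- l) w s.
Proof.
elim: d => [|d IH] t l hs hc;
  (case: (pselect (exists2 s, s \in l & pre_b s t)) => [[s sl st]|nst];
   [apply: le_trans (sum_mem sl); apply: pow_inv_le; by case/andP: st|]).
  exfalso; have [s sl hsx] := hc (fun i => nth false t i) (fun i _ => erefl).
  apply: nst; exists s => //; apply: (cyl_pre hsx) => //.
  by rewrite -(addn0 (size t)); apply: hs.
have h b : w (rcons t b) <= \sum_(s <- l | pre_b (rcons t b) s) w s.
  rewrite -big_filter; apply: IH.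
    move=> s; rewrite mem_filter => /andP[_ sl]; rewrite size_rcons addSnnS; exact: hs.
  move=> x /cyl_rcons [xt xb]; have [s sl sx] := hc x xt.
  exists s; rewrite ?mem_filter ?sl ?andbT //.
  case: (leqP (size s) (size t)) => st.
    by exfalso; apply: nst; exists s => //; apply: cyl_pre sx xt st.
  apply: (cyl_pre (rcons_cyl xt xb) sx); by rewrite size_rcons.
have -> : w t = w (rcons t false) + w (rcons t true).
  rewrite /w !size_rcons inv2pow; set a := (_ ^-1); field => //.
apply: le_trans (lerD (h false) (h true)) _.
rewrite [X in _ <= X](bigID (fun s => pre_b (rcons t false) s)) /=; apply: lerD => //.
rewrite big_mkcond [X in _ <= X]big_mkcond /=; apply: ler_sum => s _.
case: ifP => h1; case: ifP => h0 //=; try exact: w_ge0.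
by exfalso; apply: (pre_excl (negbFE h0) h1).
Qed.

Section Koenig.
Variable c : nat -> seq bool.
Hypothesis cov : setT `<=` \bigcup_n cyl (c n).

Definition good (s : seq bool) :=
  forall N, exists x, cyl s x /\ forall n, (n < N)%N -> ~ cyl (c n) x.

Lemma good_step s : good s -> good (rcons s false) \/ good (rcons s true).
Proof.
move=> gs; apply: contrapT => /not_orP [g0 g1].
have [N0 h0] : exists N, forall x, cyl (rcons s false) x -> exists2 n, (n < N)%N & cyl (c n) x.
  apply: contrapT => hn; apply: g0 => N; apply: contrapT => hN; apply: hn; exists N => x hx.
  apply: contrapT => hnx; apply: hN; exists x; split => // n hn hc; apply: hnx; by exists n.
have [N1 h1] : exists N, forall x, cyl (rcons s true) x -> exists2 n, (n < N)%N & cyl (c n) x.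
  apply: contrapT => hn; apply: g1 => N; apply: contrapT => hN; apply: hn; exists N => x hx.
  apply: contrapT => hnx; apply: hN; exists x; split => // n hn hc; apply: hnx; by exists n.
have [x [xs xn]] := gs (maxn N0 N1).
case hb: (x (size s)).
  have [n hn hc] := h1 x (rcons_cyl xs hb).
  by apply: (xn n) => //; apply: leq_trans hn (leq_maxr _ _).
have [n hn hc] := h0 x (rcons_cyl xs hb).
by apply: (xn n) => //; apply: leq_trans hn (leq_maxl _ _).
Qed.

Fixpoint pref (d : nat) : seq bool :=
  if d is d'.+1 then rcons (pref d') (~~ `[< good (rcons (pref d') false) >])
  else [::].

Lemma size_pref d : size (pref d) = d.
Proof. by elim: d => //= d IH; rewrite size_rcons IH. Qed.

Lemma finite_cover : exists N, forall x, exists2 n, (n < N)%N & cyl (c n) x.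
Proof.
apply: contrapT => hn.
have g0 : good [::].
  move=> N; apply: contrapT => hN; apply: hn; exists N => x.
  apply: contrapT => hnx; apply: hN; exists x; split => // n hn' hc; apply: hnx; by exists n.
have gp d : good (pref d).
  elim: d => //= d IH; case: (pselect (good (rcons (pref d) false))) => h.
    by rewrite asboolT.
  rewrite asboolF //=; by case: (good_step IH).
pose x := fun i => nth false (pref i.+1) i.
have nth_pref d i : (i < d)%N -> nth false (pref d) i = x i.
  elim: d => // d IH; rewrite ltnS leq_eqVlt => /orP[/eqP ->|hi] /=.
    by [].
  by rewrite nth_rcons size_pref hi IH.
have [n _ hc] := cov (I : setT x).
have [y [yc yn]] := gp (size (c n)) n.+1.
apply: (yn n) => // i hi; rewrite yc ?size_pref // nth_pref //; exact: hc.
Qed.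

End Koenig.

Lemma not_null_T : ~ null setT.
Proof.
move=> h; have [c [cov s]] := h 1%N; have [N hN] := finite_cover cov.
pose l := map c (index_iota 0 N).
have H : w [::] <= \sum_(u <- l) w u.
  apply: (@cover_sum (\max_(n < N) size (c n))).
    move=> u /mapP [n]; rewrite mem_index_iota => /andP[_ hn] ->.
    exact: (@leq_bigmax _ (fun n : 'I_N => size (c n)) (Ordinal hn)).
  move=> x _; have [n hn hc] := hN x; exists (c n) => //.
  by apply: map_f; rewrite mem_index_iota.
move: H; rewrite big_map big_mkord /w /= expr0 invr1 => H.
have := s N; rewrite expr1 => H2.
have : (1 : rat) <= 2%:R^-1 by apply: le_trans H H2.
by rewrite invr_ge1 // ?ler1n // unitfE.
Qed.

Lemma min_exists (P : set (set cantor) -> Prop) : (exists H, P H) -> exists F, min_size P F.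
Proof.
move=> [H1 PH1].
case: (pselect (P set0)) => [P0|nP0].
  by exists set0; split => // G _; exact: card_ge0.
pose Q (Phi : set (set (set cantor) -> set cantor)) :=
  (forall f, Phi f -> forall H, P H -> H (f H)) /\
  (forall H, P H -> forall f g, Phi f -> Phi g -> f H = g H -> f = g).
have [Phi [[Q1 Q2] Pmax]] : exists Phi, Q Phi /\ forall B, Phi `<` B -> ~ Q B.
  apply: Zorn_bigcup => F FQ Ftot; split.
    move=> f [Phi FPhi Pf]; exact: (FQ _ FPhi).1.
  move=> H PH f g [Phi1 F1 f1] [Phi2 F2 g2] e.
  case: (Ftot _ _ F1 F2) => sub.
    exact: (FQ _ F2).2 H PH f g (sub _ f1) g2 e.
  exact: (FQ _ F1).2 H PH f g f1 (sub _ g2) e.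
have [H0 [PH0 H0cov]] : exists H0, P H0 /\ forall A, H0 A -> exists2 f, Phi f & f H0 = A.
  apply: contrapT => nc.
  have hex : forall H, exists A, P H -> H A /\ forall f, Phi f -> f H <> A.
    move=> H; case: (pselect (P H)) => PH; last by exists set0.
    apply: contrapT => hn; apply: nc; exists H; split => // A HA.
    apply: contrapT => hnf; apply: hn; exists A => _; split => // f Pf e; apply: hnf; by exists f.
  have [g hg] := choice hex.
  apply: (Pmax (Phi `|` [set g])).
    split; first by move=> f Pf; left.
    move=> hsub; have Pg := hsub g (or_intror erefl).
    by have [_ /(_ g Pg)] := hg H1 PH1.
  split.
    move=> f [Pf|->] H PH; first exact: Q1 f Pf H PH.
    by have [] := hg H PH.
  move=> H PH f f' [Pf|->] [Pf'|->] e.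
  - exact: Q2 H PH f f' Pf Pf' e.
  - by have [_ /(_ f Pf)] := hg H PH.
  - by have [_ /(_ f' Pf')] := hg H PH; rewrite e.
  - by [].
exists H0; split => // G PG.
have hsel : forall A, exists f, H0 A -> Phi f /\ f H0 = A.
  move=> A; case: (pselect (H0 A)) => hA; last by exists (fun _ => set0).
  by have [f Pf e] := H0cov A hA; exists f.
have [sel hs] := choice hsel.
apply: (@mk_card_le _ _ _ _ (fun A => sel A G)).
  by move=> A hA; have [Ps _] := hs A hA; exact: Q1 _ Ps G PG.
move=> A B hA hB e.
have [PsA eA] := hs A hA; have [PsB eB] := hs B hB.
by rewrite -eA -eB (Q2 G PG _ _ PsA PsB e).
Qed.

Lemma set1_ne0 (x : cantor) : [set x] <> set0.
Proof. by move=> e; have : [set x] x by []; rewrite e. Qed.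

Lemma inc_add F : incomparable_family F -> add_null_family F.
Proof.
case=> Fsub Finc; split; first by move=> A /Fsub [].
move=> nU.
have pt : nonempty_null [set (fun _ : nat => false)].
  by split; [exact: null_set1 | exact: set1_ne0].
have [q Fq _] := Finc _ pt.
have nn : nonempty_null (\bigcup_(A in F) A).
  split => // e; apply: (Fsub q Fq).2; apply/seteqP; split => // x qx.
  have : (\bigcup_(A in F) A) x by exists q.
  by rewrite e.
have [q' Fq' [_ nq]] := Finc _ nn.
by apply: nq => x qx; exists q'.
Qed.

Lemma add_inc G : min_size add_null_family G ->
  exists F, incomparable_family F /\ (F #<= G)%card.
Proof.
case=> [[Gnull GnU] Gmin].
pose U := \bigcup_(A in G) A.
have Sadd : add_null_family [set [set x] | x in U].
  split; first by move=> _ [x _ <-]; exact: null_set1.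
  have -> : \bigcup_(B in [set [set x] | x in U]) B = U.
    apply/seteqP; split => x.
      by move=> [_ [y Uy <-] ->].
    by move=> Ux; exists [set x] => //; exists x.
  exact: GnU.
have GT : (G #<= [set: cantor])%card.
  apply: card_le_trans (Gmin _ Sadd) _.
  apply: card_le_trans (card_image_le _ _) _; exact: card_leT.
have /pcard_injP [io ioinj] := GT.
have [A0 [GA0 nA0]] : exists A0, G A0 /\ A0 <> set0.
  apply: contrapT => h; apply: GnU; apply: null_sub (null_set1 (fun _ => false)).
  move=> x [A GA Ax]; exfalso; apply: h; exists A; split => // e; by rewrite e in Ax.
pose Phi A := if `[< A = A0 >] then shift true [set io A]
              else shift false A `|` shift true [set io A].
have Phi_pt A : Phi A (cons_c true (io A)).
  rewrite /Phi; case: asboolP => _; first by exists (io A).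
  by right; exists (io A).
exists (Phi @` [set A | G A /\ A <> set0]); split; last first.
  apply: card_le_trans (card_image_le _ _) _; apply: subset_card_le => A [] //.
split.
  move=> _ [A [GA nA] <-]; split.
    rewrite /Phi; case: asboolP => _; first exact: null_shift (null_set1 _).
    apply: null_setU; [exact: null_shift (Gnull _ GA)| exact: null_shift (null_set1 _)].
  by move=> e; have := Phi_pt A; rewrite e.
move=> p [pn pne].
case: (pselect (exists y, p (cons_c true y))) => [[y py]|npy].
  have [A [GA [nA0' [nio nsub]]]] : exists A, G A /\ A <> A0 /\ io A <> y /\
      ~ (A `<=` [set x | p (cons_c false x)]).
    apply: contrapT => h; apply: GnU.
    pose Y := \bigcup_(A in [set A | G A /\ io A = y]) A.
    have nY : null Y.
      case: (pselect (exists A1, G A1 /\ io A1 = y)) => [[A1 [GA1 e1]]|nA1].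
        apply: null_sub (Gnull _ GA1) => x [A [GA eA] Ax].
        have eAA : A = A1 by apply: ioinj; rewrite ?inE ?eA ?e1 //; apply/mem_set.
        by rewrite -eAA.
      apply: null_sub (null_set1 (fun _ => false)) => x [A hA _]; exfalso.
      by apply: nA1; exists A.
    apply: null_sub (null_setU (null_setU (null_tail false pn) (Gnull _ GA0)) nY).
    move=> x [A GA Ax].
    case: (pselect (A = A0)) => [e|ne]; first by left; right; rewrite -e.
    case: (pselect (io A = y)) => [e|ne2]; first by right; exists A.
    left; left; apply: contrapT => nx; apply: h; exists A; split => //; split => //.
    split => // sub; apply: nx; exact: sub.
  have nA : A <> set0 by move=> e; apply: nsub; rewrite e.
  exists (Phi A); first by exists A.
  have PhiA : Phi A = shift false A `|` shift true [set io A] by rewrite /Phi asboolF.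
  split.
    move=> sub; have := sub _ py; rewrite PhiA => -[[x _ e]|[x xio e]].
      by have := congr1 (fun f => f 0%N) e.
    by apply: nio; rewrite -xio; exact: cons_c_inj e.
  move=> sub; apply: nsub => x Ax.
  have : Phi A (cons_c false x) by rewrite PhiA; left; exists x.
  by move/sub.
have [x px] : exists x, p x.
  apply: contrapT => h; apply: pne; apply/seteqP; split => // z pz; apply: h; by exists z.
exists (Phi A0); first by exists A0.
have PhiA0 : Phi A0 = shift true [set io A0] by rewrite /Phi asboolT.
split.
  move=> sub; have := sub _ px; rewrite PhiA0 => -[z _ e].
  apply: npy; exists (fun i => x i.+1).
  have -> : cons_c true (fun i => x i.+1) = x.
    by apply: funext => -[|i] //; rewrite -e.
  done.
move=> sub; apply: npy; exists (io A0); apply: sub; rewrite PhiA0; by exists (io A0).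
Qed.

Theorem mainTheorem10 :
  exists F G : set (set cantor),
    min_size incomparable_family F /\ min_size add_null_family G /\ (F #= G)%card.
Proof.
have [G minG] : exists G, min_size add_null_family G.
  apply: min_exists; exists [set [set x] | x in setT]; split.
    by move=> _ [x _ <-]; exact: null_set1.
  move=> h; apply: not_null_T; apply: null_sub h => x _.
  by exists [set x] => //; exists x.
have [F [incF FG]] := add_inc minG.
exists F, G; split.
  split => // H incH; apply: card_le_trans FG _; exact: minG.2 H (inc_add incH).
split => //; apply: Cantor_Bernstein FG (minG.2 F (inc_add incF)).
Qed.
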